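(* For every integer $n\ge 0$, $$\sum_{j,k}\genfrac{\{}{\}}{0pt}{}{n}{k}\genfrac{[}{]}{0pt}{}{k}{j}\binom{n}{j}(-1)^k=(-1)^n .$$
   Context: Here $\genfrac{[}{]}{0pt}{}{n}{k}$ denotes the unsigned (absolute) Stirling number of the first kind and $\genfrac{\{}{\}}{0pt}{}{n}{k}$ the ordinary Stirling number of the second kind (Knuth's notation), with $\genfrac{[}{]}{0pt}{}{0}{0}=\genfrac{\{}{\}}{0pt}{}{0}{0}=1$, $\genfrac{[}{]}{0pt}{}{n}{0}=\genfrac{\{}{\}}{0pt}{}{n}{0}=0$ for $n>0$, and $\genfrac{[}{]}{0pt}{}{n}{k}=\genfrac{\{}{\}}{0pt}{}{n}{k}=0$ for $0\le n<k$. The double sum is over all integers $j,k$ with $0\le j\le k\le n$. *)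

(* Defs.v *)
From mathcomp Require Import all_boot all_order all_algebra.
Set Implicit Arguments. Unset Strict Implicit. Unset Printing Implicit Defensive.

Fixpoint stirling1 (n k : nat) : nat :=
  match n, k with
  | 0, 0 => 1
  | 0, _.+1 => 0
  | _.+1, 0 => 0
  | n'.+1, k'.+1 => n' * stirling1 n' k'.+1 + stirling1 n' k'
  end.

Fixpoint stirling2 (n k : nat) : nat :=
  match n, k with
  | 0, 0 => 1
  | 0, _.+1 => 0
  | _.+1, 0 => 0
  | n'.+1, k'.+1 => k'.+1 * stirling2 n' k'.+1 + stirling2 n' k'
  end.

(* Main.v *)
Require Import Defs.
From mathcomp Require Import all_boot all_order all_algebra ring.
Import GRing.Theory.
Local Open Scope ring_scope.

Lemma s1z k j : (k < j)%N -> stirling1 k j = 0%N.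
Proof.
elim: k j => [|k IH] [|j] //= H.
by rewrite IH 1?IH ?muln0 // ltnW.
Qed.

Lemma s2z k j : (k < j)%N -> stirling2 k j = 0%N.
Proof.
elim: k j => [|k IH] [|j] //= H.
by rewrite IH 1?IH ?muln0 // ltnW.
Qed.

Definition R k : {poly int} := \poly_(j < k.+1) (stirling1 k j)%:R.

Lemma coefR k j : (R k)`_j = (stirling1 k j)%:R.
Proof.
rewrite coef_poly; case: ltnP => // H.
by rewrite s1z.
Qed.

Lemma RS k : R k.+1 = R k * ('X + (k%:R)%:P).
Proof.
apply/polyP => i; rewrite coefR mulrDr coefD coefMX mulrC coefCM coefR.
case: i => [|i] /=. rewrite coefR; case: k => [|k] /=. by rewrite mul0r addr0. by rewrite mulr0 addr0.
by rewrite coefR natrD natrM addrC mulrC.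
Qed.

Definition t n k : {poly int} := ((stirling2 n k)%:R * (-1)^+k)%:P * R k.

Lemma Sn n : \sum_(k < n.+1) t n k = ((-1)^+n)%:P * 'X^n.
Proof.
elim: n => [|n IH].
  rewrite big_ord_recl big_ord0 /t /= addr0 /R poly_def big_ord_recl big_ord0 /=. by rewrite addr0 scale1r mul1r.
rewrite big_ord_recl {1}/t /= mulr0n mul0r add0r.
have E : forall i : 'I_n.+1, t n.+1 (bump 0 i) =
   (((i.+1)%:R * (stirling2 n i.+1)%:R * (-1)^+i.+1)%:P * R i.+1)
   + t n i * - ('X + (i%:R)%:P).
  move=> i; rewrite /t /bump /= add1n /= RS natrD natrM add0n !(rmorphM, rmorphD, rmorphXn, rmorphN, rmorph1, rmorph_nat) /= exprS.
  ring.
rewrite (eq_bigr _ (fun i _ => E i)) big_split /=.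
set f := fun k : nat => ((k%:R * (stirling2 n k)%:R * (-1)^+k)%:P * R k : {poly int}).
have -> : \sum_(i < n.+1) ((i.+1%:R * (stirling2 n i.+1)%:R * (-1) ^+ i.+1)%:P * R i.+1)
     = \sum_(i < n.+1) f i.
  transitivity (\sum_(i < n.+1) f i.+1); first by [].
  have f0 : f 0%N = 0 by rewrite /f !(mulr0n, mul0r, mulr0, polyC0).
  have f1 : f n.+1 = 0 by rewrite /f s2z // !(mulr0n, mul0r, mulr0, polyC0).
  have H1 : \sum_(i < n.+2) f i = f 0%N + \sum_(i < n.+1) f i.+1 by rewrite big_ord_recl.
  have H2 : \sum_(i < n.+2) f i = \sum_(i < n.+1) f i + f n.+1 by rewrite big_ord_recr.
  rewrite f0 add0r in H1; rewrite f1 addr0 in H2.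
  by rewrite -H1 H2.
rewrite -big_split /=.
have -> : \sum_(i < n.+1) (f i + t n i * - ('X + (i%:R)%:P)) = \sum_(i < n.+1) t n i * - 'X.
  apply: eq_bigr => i _; rewrite /f /t !rmorphM /=; ring.
by rewrite -mulr_suml IH exprS rmorphM /= rmorphN1 exprS; ring.
Qed.

Theorem mainTheorem3 (n : nat) :
  \sum_(0 <= k < n.+1) \sum_(0 <= j < k.+1)
     ((stirling2 n k * stirling1 k j * 'C(n, j))%:R * (-1) ^+ k : int)
  = (-1) ^+ n.
Proof.
have W : forall k, (k < n.+1)%N ->
    \sum_(0 <= j < k.+1) ((stirling2 n k * stirling1 k j * 'C(n, j))%:R * (-1) ^+ k : int)
  = \sum_(0 <= j < n.+1) ((stirling2 n k * stirling1 k j * 'C(n, j))%:R * (-1) ^+ k : int).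
  move=> k Hk.
  rewrite (@big_cat_nat _ _ _ k.+1 0 n.+1) //= [X in _ + X]big1_seq ?addr0 //.
  move=> j /andP[_]; rewrite mem_index_iota => /andP[Hj _].
  by rewrite s1z // muln0 mul0n mul0r.
rewrite (eq_big_nat _ _ (fun k Hk => W k (andP Hk).2)).
rewrite exchange_big /=.
have C : forall j, \sum_(0 <= k < n.+1)
   ((stirling2 n k * stirling1 k j * 'C(n, j))%:R * (-1) ^+ k : int)
   = ('C(n, j))%:R * ((-1) ^+ n * (j == n)%:R).
  move=> j.
  have := congr1 (fun p : {poly int} => p`_j) (Sn n).
  rewrite /= coefCM coefXn coef_sum => <-.
  rewrite big_mkord mulr_sumr; apply: eq_bigr => k _.
  rewrite /t coefCM coefR !natrM; ring.
rewrite (eq_bigr _ (fun j _ => C j)) big_nat_recr //= eqxx mulr1 binn.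
rewrite big_nat_cond big1 ?add0r ?mul1r //.
move=> j /andP[/andP[_ Hj] _]; rewrite (_ : (j == n) = false) ?mulr0 //.
by apply/negbTE; rewrite neq_ltn Hj.
Qed.
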